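(* Let $w$ be an infinite word and let $n_0<n_1<n_2$ be three consecutive lengths of palindromic prefixes of $w$ (no palindromic prefix of $w$ has length strictly between $n_0$ and $n_1$ or between $n_1$ and $n_2$), with corresponding prefixes $\pi_0,\pi_1,\pi_2$. Write $\pi_1=\pi_0b$. Then either $\pi_2=\pi_1b$ (i.e. $\pi_2=\pi_1\pi_0^{-1}\pi_1$), or $n_2>n_0+n_1$.
   Context: Infinite words are right-infinite; a finite word is a palindrome if it equals its reversal, the empty word being a palindrome. *)

(* Defs.v *)
From mathcomp Require Import all_boot.
Set Implicit Arguments. Unset Strict Implicit. Unset Printing Implicit Defensive.

Definition infword (A : Type) := nat -> A.

Definition pref (A : Type) (w : infword A) (n : nat) : seq A := mkseq w n.

Definition palindrome (A : Type) (s : seq A) : Prop := rev s = s.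

(* Main.v *)
Require Import Defs.
From mathcomp Require Import all_boot.
From mathcomp Require Import zify.
Set Implicit Arguments.

Definition Pal (A : Type) (w : infword A) n := forall i, i < n -> w i = w (n - 1 - i).
Definition Per (A : Type) (w : infword A) n p := forall i, i + p < n -> w i = w (i + p).

Lemma palP (A : Type) (w : infword A) n : palindrome (pref w n) <-> Pal w n.
Proof.
split.
- move=> H i Hi.
  have := congr1 (fun s => nth (w 0) s (n - 1 - i)) H => /=.
  rewrite nth_rev /pref size_mkseq; last by lia.
  rewrite !nth_mkseq; try lia.
  by have -> : n - (n - 1 - i).+1 = i by lia.
- move=> H; apply: (@eq_from_nth _ (w 0)); first by rewrite size_rev.
  move=> i; rewrite size_rev /pref size_mkseq => Hi.
  rewrite nth_rev size_mkseq // !nth_mkseq; try lia.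
  rewrite H; last by lia. f_equal; lia.
Qed.

Lemma L1 (A : Type) (w : infword A) n m : Pal w n -> Pal w m -> m <= n -> Per w n (n - m).
Proof.
move=> Hn Hm Hmn i Hi.
rewrite (Hn (i + (n - m))); last by lia.
rewrite Hm; last by lia. f_equal; lia.
Qed.

Lemma L2 (A : Type) (w : infword A) n p : Pal w n -> Per w n p -> p <= n -> Pal w (n - p).
Proof.
move=> Hn Hp Hpn i Hi.
rewrite Hn; last by lia.
rewrite (Hp (n - p - 1 - i)); last by lia. f_equal; lia.
Qed.

Theorem lemma5p5 (A : Type) (w : infword A) (n0 n1 n2 : nat) :
  n0 < n1 -> n1 < n2 ->
  palindrome (pref w n0) -> palindrome (pref w n1) -> palindrome (pref w n2) ->
  (forall m, n0 < m < n1 -> ~ palindrome (pref w m)) ->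
  (forall m, n1 < m < n2 -> ~ palindrome (pref w m)) ->
  let b := drop n0 (pref w n1) in
  pref w n2 = pref w n1 ++ b \/ n0 + n1 < n2.
Proof.
move=> h01 h12 /palP P0 /palP P1 /palP P2 G1 G2 b.
case: (ltnP (n0 + n1) n2) => Hle; first by right.
left.
have Pd := L1 P2 P1 (ltnW h12).
have Pe := L1 P1 P0 (ltnW h01).
have Pde := L1 P2 P0 (ltnW (ltn_trans h01 h12)).
have Hde : n2 - n1 = n1 - n0.
  case: (ltngtP (n2 - n1) (n1 - n0)) => // H.
  -
    have Pd1 : Per w n1 (n2 - n1) by move=> i Hi; apply: Pd; lia.
    have := L2 P1 Pd1 ltac:(lia).
    move/palP => H1; exfalso; apply: (G1 (n1 - (n2 - n1))) H1; lia.
  -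
    have Pe2 : Per w n2 (n1 - n0).
      move=> i Hi.
      case: (ltnP i (n2 - n1)) => Hi2.
      + apply: Pe; lia.
      + have E1 := Pd (i - (n2 - n1)) ltac:(lia).
        have E2 := Pde (i - (n2 - n1)) ltac:(lia).
        have -> : i = i - (n2 - n1) + (n2 - n1) by lia.
        rewrite -E1 E2; f_equal; lia.
    have := L2 P2 Pe2 ltac:(lia).
    move/palP => H1; exfalso; apply: (G2 (n2 - (n1 - n0))) H1; lia.
apply: (@eq_from_nth _ (w 0)).
  rewrite /b size_cat size_drop /pref !size_mkseq; lia.
move=> i; rewrite /pref size_mkseq => Hi.
rewrite nth_cat size_mkseq nth_mkseq //.
case: ifP => Hi1; first by rewrite nth_mkseq.
rewrite /b nth_drop nth_mkseq; last by lia.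
rewrite (Pd (n0 + (i - n1))); last by lia.
f_equal; lia.
Qed.
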